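(* Let $F=\{\mathbb{R}^{n};f_{1},\dots,f_{m}\}$ be an IFS of contractive similitudes (at least two distinct maps) that obeys the open set condition, with contraction factors $\lambda_i=s^{a_i}$ where $s=\max_i\lambda_i$, and take costs $c_{l}=a_{l}$ for all $l\in\{1,\dots,m\}$. Let $\mathbf{i},\mathbf{j}\in\Sigma^{\infty}$ and $p,q\in\mathbb{N}$ be such that $\sigma^{p}\mathbf{i}=\sigma^{q}\mathbf{j}$ and $c(\mathbf{i}|p)=c(\mathbf{j}|q)$. Then for every closed $T\subset\mathbb{R}^n$, \[ \Pi_{T}(\mathbf{i})=E\,\Pi_{T}(\mathbf{j}),\qquad E=f_{i_{1}}^{-1}\circ\cdots\circ f_{i_{p}}^{-1}\circ f_{j_{q}}\circ\cdots\circ f_{j_{1}}. \]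
   Context: An IFS $F$ consists of maps $f_{i}:\mathbb{R}^{n}\to\mathbb{R}^{n}$ with $|f_{i}(x)-f_{i}(y)|=\lambda_{i}|x-y|$, $\lambda_{i}\in(0,1)$. $F$ obeys the open set condition if there is a nonempty open $O$ with $f_i(O)\subset O$ for all $i$ and $f_{i}(O)\cap f_{j}(O)=\emptyset$ for $i\neq j$. Let $\Sigma=\{1,\dots,m\}$, $\Sigma^{\infty}$ the infinite sequences over $\Sigma$, and $\sigma:\Sigma^\infty\to\Sigma^\infty$ the shift $\sigma(i_1i_2i_3\dots)=i_2i_3\dots$. For $\mathbf{i}\in\Sigma^{\infty}$: $\mathbf{i}|k=i_{1}\dots i_{k}$, $\mathbf{i}|0=\emptyset$, $f_{(\mathbf{j}|l)}=f_{j_{1}}\circ\cdots\circ f_{j_{l}}$, $f_{-(\mathbf{i}|k)}=f_{i_{1}}^{-1}\circ\cdots\circ f_{i_{k}}^{-1}$, $c(\mathbf{i}|k)=c_{i_{1}}+\cdots+c_{i_{k}}$, $c(\emptyset)=0$; \[ \Pi_{T}(\mathbf{i}|k)=f_{-(\mathbf{i}|k)}\big(\{f_{(\mathbf{j}|l)}(T):\mathbf{j}\in\Sigma^{\infty},\ l\in\mathbb{N},\ c(\mathbf{j}|l-1)\leq c(\mathbf{i}|k)<c(\mathbf{j}|l)\}\big),\quad \Pi_{T}(\mathbf{i})=\bigcup_{k\geq1}\Pi_{T}(\mathbf{i}|k). \] A map applied to a collection of sets is applied to each member. *)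

(* Defs.v *)
From HB Require Import structures.
From mathcomp Require Import all_boot all_order all_algebra.
From mathcomp Require Import all_classical all_reals all_analysis.
Set Implicit Arguments. Unset Strict Implicit. Unset Printing Implicit Defensive.
Import Order.TTheory GRing.Theory Num.Theory numFieldNormedType.Exports.
Local Open Scope ring_scope.
Local Open Scope classical_set_scope.

Definition enorm (R : realType) (n : nat) (x : 'rV[R]_n) : R :=
  Num.sqrt (\sum_(k < n) (x ord0 k) ^+ 2).

(* The (set-theoretic) inverse map f^{-1}: for y, some x with f x = y
   (unique and existing when f is bijective, as similitudes of R^n are). *)
Definition inv_map (R : realType) (n : nat) (f : 'rV[R]_n -> 'rV[R]_n)
  (y : 'rV[R]_n) : 'rV[R]_n := xget (0 : 'rV[R]_n) [set x | f x = y].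

(* shift sigma on Sigma^infty = nat -> 'I_m  (symbols 0..m-1) *)
Definition sshift (m : nat) (i : nat -> 'I_m) : nat -> 'I_m := fun t => i t.+1.

(* i|k = i_1 ... i_k  (i_1 is i 0) *)
Definition wprefix (m : nat) (i : nat -> 'I_m) (k : nat) : seq 'I_m :=
  [seq i t | t <- iota 0 k].

Definition cost (R : realType) (m : nat) (c : 'I_m -> R) (w : seq 'I_m) : R :=
  \sum_(l <- w) c l.

Definition wcomp (R : realType) (n m : nat) (f : 'I_m -> 'rV[R]_n -> 'rV[R]_n)
  (w : seq 'I_m) : 'rV[R]_n -> 'rV[R]_n :=
  foldr (fun l g => f l \o g) id w.

Definition wcompinv (R : realType) (n m : nat) (f : 'I_m -> 'rV[R]_n -> 'rV[R]_n)
  (w : seq 'I_m) : 'rV[R]_n -> 'rV[R]_n :=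
  foldr (fun l g => inv_map (f l) \o g) id w.

Definition imgc (R : realType) (n : nat) (g : 'rV[R]_n -> 'rV[R]_n)
  (C : set (set 'rV[R]_n)) : set (set 'rV[R]_n) :=
  [set g @` A | A in C].

Definition PiT (R : realType) (n m : nat) (f : 'I_m -> 'rV[R]_n -> 'rV[R]_n)
  (c : 'I_m -> R) (T : set 'rV[R]_n) (w : seq 'I_m) : set (set 'rV[R]_n) :=
  imgc (wcompinv f w)
    [set B | exists (j : nat -> 'I_m) (l : nat),
       (cost c (wprefix j (l - 1)) <= cost c w < cost c (wprefix j l))
       /\ B = wcomp f (wprefix j l) @` T].

Definition PiTinf (R : realType) (n m : nat) (f : 'I_m -> 'rV[R]_n -> 'rV[R]_n)
  (c : 'I_m -> R) (T : set 'rV[R]_n) (i : nat -> 'I_m) : set (set 'rV[R]_n) :=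
  \bigcup_(k in [set k : nat | (0 < k)%N]) PiT f c T (wprefix i k).

Definition OSC (R : realType) (n m : nat) (f : 'I_m -> 'rV[R]_n -> 'rV[R]_n) : Prop :=
  exists O : set 'rV[R]_n, open O /\ O !=set0 /\
    (forall l, f l @` O `<=` O) /\
    (forall l1 l2, l1 <> l2 -> f l1 @` O `&` f l2 @` O = set0).

(* Main.v *)
Require Import Defs.
From HB Require Import structures.
From mathcomp Require Import all_boot all_order all_algebra.
From mathcomp Require Import all_classical all_reals all_analysis.
From mathcomp Require Import ring lra.
Import Order.TTheory GRing.Theory Num.Theory numFieldNormedType.Exports.
Local Open Scope ring_scope.
Local Open Scope classical_set_scope.

Section Lin.
Variables (R : realType) (n : nat).
Implicit Types u v w x y : 'rV[R]_n.

Definition dot u v : R := (u *m v^T) ord0 ord0.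

Lemma dotE u v : dot u v = \sum_k u ord0 k * v ord0 k.
Proof. by rewrite /dot mxE; apply: eq_bigr => k _; rewrite mxE. Qed.

Lemma dotC u v : dot u v = dot v u.
Proof. by rewrite !dotE; apply: eq_bigr => k _; rewrite mulrC. Qed.

Lemma dotBl u v w : dot (u - v) w = dot u w - dot v w.
Proof. by rewrite !dotE -sumrB; apply: eq_bigr => k _; rewrite !mxE mulrBl. Qed.

Lemma dotBr u v w : dot w (u - v) = dot w u - dot w v.
Proof. by rewrite ![dot w _]dotC dotBl. Qed.

Lemma dotZl a u v : dot (a *: u) v = a * dot u v.
Proof. by rewrite !dotE mulr_sumr; apply: eq_bigr => k _; rewrite !mxE mulrA. Qed.

Lemma dotZr a u v : dot v (a *: u) = a * dot v u.
Proof. by rewrite ![dot v _]dotC dotZl. Qed.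

Lemma dot_ge0 u : 0 <= dot u u.
Proof. by rewrite dotE; apply: sumr_ge0 => k _; rewrite -expr2 sqr_ge0. Qed.

Lemma enormE u : enorm u ^+ 2 = dot u u.
Proof.
rewrite /enorm sqr_sqrtr; last by rewrite -(dotE u u) dot_ge0 .
by rewrite dotE; apply: eq_bigr => k _; rewrite expr2.
Qed.

Lemma dot_eq0 u : dot u u = 0 -> u = 0.
Proof.
rewrite dotE => H; apply/rowP => k; rewrite mxE.
have Hp : forall i : 'I_n, true -> 0 <= u ord0 i * u ord0 i.
  by move=> i _; rewrite -expr2 sqr_ge0.
have /eqP := psumr_eq0P Hp H (i:=k) isT.
rewrite mulf_eq0 orbb => /eqP.
by have -> : (0 : 'I_1) = ord0 by apply/val_inj.
Qed.

Lemma dot_polar u v : dot (u - v) (u - v) = dot u u + dot v v - 2 * dot u v.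
Proof. rewrite dotBl !dotBr (dotC v u); ring. Qed.

Lemma dot_delta x (a : 'I_n) : dot x (delta_mx 0 a) = x ord0 a.
Proof. by rewrite /dot trmx_delta -colE mxE; congr (x _ a); apply/val_inj. Qed.

Lemma sim_surj (g : 'rV[R]_n -> 'rV[R]_n) (lam : R) : 0 < lam ->
  (forall x y, enorm (g x - g y) = lam * enorm (x - y)) -> forall y, exists x, g x = y.
Proof.
move=> lam0 Hs.
have lamN : lam != 0 by rewrite gt_eqF.
have Hs2 : forall x y, dot (g x - g y) (g x - g y) = lam ^+ 2 * dot (x - y) (x - y).
  by move=> x y; rewrite -!enormE Hs exprMn.
pose h x := lam^-1 *: (g x - g 0).
have hB : forall x y, h x - h y = lam^-1 *: (g x - g y).
  by move=> x y; rewrite /h -scalerBr; congr (_ *: _); rewrite opprB addrA subrK.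
have hd : forall x y, dot (h x - h y) (h x - h y) = dot (x - y) (x - y).
  move=> x y; rewrite hB dotZl dotZr Hs2 mulrA mulrA.
  by rewrite -[lam^-1 * lam^-1]expr2 -exprMn mulVf // expr1n mul1r.
have h0 : h 0 = 0 by rewrite /h subrr scaler0.
have hn : forall x, dot (h x) (h x) = dot x x.
  by move=> x; have := hd x 0; rewrite h0 !subr0.
have hdot : forall x y, dot (h x) (h y) = dot x y.
  move=> x y; have := hd x y; rewrite !dot_polar !hn => E.
  lra.
pose M : 'M[R]_n := \matrix_(a, b) h (delta_mx 0 a) ord0 b.
have MMt : M *m M^T = 1%:M.
  apply/matrixP => a b; rewrite !mxE.
  transitivity (dot (h (delta_mx 0 a)) (h (delta_mx 0 b))).
    by rewrite dotE; apply: eq_bigr => k _; rewrite !mxE.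
  rewrite hdot dot_delta mxE eqxx /=.
  by rewrite eq_sym.
have MtM : M^T *m M = 1%:M by apply: mulmx1C.
have hMt : forall x, h x *m M^T = x.
  move=> x; apply/rowP => a; rewrite !mxE.
  transitivity (dot (h x) (h (delta_mx 0 a))).
    by rewrite dotE; apply: eq_bigr => k _; rewrite !mxE.
  by rewrite hdot dot_delta; congr (x _ a); apply/val_inj.
have hM : forall x, h x = x *m M.
  move=> x; apply/eqP; rewrite -subr_eq0; apply/eqP/dot_eq0.
  rewrite dot_polar hn.
  have -> : dot (x *m M) (x *m M) = dot x x.
    by rewrite /dot trmx_mul !mulmxA -(mulmxA x) MMt mulmx1.
  have -> : dot (h x) (x *m M) = dot x x.
    by rewrite /dot trmx_mul mulmxA hMt.
  ring.
move=> y; exists ((lam^-1 *: (y - g 0)) *m M^T).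
have : h ((lam^-1 *: (y - g 0)) *m M^T) = lam^-1 *: (y - g 0).
  by rewrite hM -mulmxA MtM mulmx1.
rewrite /h => /(congr1 (fun v => lam *: v)); rewrite !scalerA mulfV // !scale1r.
by move/(congr1 (fun v => v + g 0)); rewrite !subrK.
Qed.

End Lin.

Section Comb.
Variables (R : realType) (n m : nat) (f : 'I_m -> 'rV[R]_n -> 'rV[R]_n) (c : 'I_m -> R).
Hypothesis invf : forall l x, inv_map (f l) (f l x) = x.
Hypothesis finv : forall l y, f l (inv_map (f l) y) = y.

Lemma iter_shift (i : nat -> 'I_m) k t : iter k (@sshift m) i t = i (t + k)%N.
Proof.
elim: k t => [|k IH] t /=; first by rewrite addn0.
by rewrite /sshift IH addSnnS.
Qed.

Lemma wprefixD (i : nat -> 'I_m) k t :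
  wprefix i (k + t) = wprefix i k ++ wprefix (iter k (@sshift m) i) t.
Proof.
rewrite /wprefix iotaD map_cat add0n; congr (_ ++ _).
rewrite -[k in iota k]addn0 iotaDl -map_comp; apply: eq_map => s /=.
by rewrite iter_shift addnC.
Qed.

Lemma wprefixS (i : nat -> 'I_m) k : wprefix i k.+1 = rcons (wprefix i k) (i k).
Proof.
by rewrite -addn1 wprefixD -cats1 /wprefix /= iter_shift.
Qed.

Lemma wprefix_cons (j : nat -> 'I_m) a s :
  wprefix (fun t => if t is t'.+1 then j t' else a) s.+1 = a :: wprefix j s.
Proof.
rewrite /wprefix /= -[1%N]addn0 iotaDl -map_comp; congr (_ :: _).
Qed.

Lemma wcompinv_cat w1 w2 x : wcompinv f (w1 ++ w2) x = wcompinv f w1 (wcompinv f w2 x).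
Proof. by elim: w1 => [|a w1 IH] //=; rewrite IH. Qed.

Lemma wcomp_rcons s a x : wcomp f (rcons s a) x = wcomp f s (f a x).
Proof. by elim: s => [|b s IH] //=; rewrite IH. Qed.

Lemma wcomp_rev_inv w x : wcomp f (rev w) (wcompinv f w x) = x.
Proof.
elim: w => [|a w IH] //=.
by rewrite rev_cons wcomp_rcons finv IH.
Qed.

Lemma cost_cat w1 w2 : cost c (w1 ++ w2) = cost c w1 + cost c w2.
Proof. by rewrite /cost big_cat. Qed.

Lemma cost_cons a w : cost c (a :: w) = c a + cost c w.
Proof. by rewrite /cost big_cons. Qed.

Lemma cost_nil : cost c [::] = 0.
Proof. by rewrite /cost big_nil. Qed.

Lemma img2_eq (g1 h1 g2 h2 : 'rV[R]_n -> 'rV[R]_n) (T : set 'rV[R]_n) :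
  (forall x, g1 (h1 x) = g2 (h2 x)) -> g1 @` (h1 @` T) = g2 @` (h2 @` T).
Proof. by move=> H; rewrite !image_comp; apply: eq_imagel => x _; apply: H. Qed.

Lemma PiT_mono (T : set 'rV[R]_n) (i : nat -> 'I_m) k :
  PiT f c T (wprefix i k) `<=` PiT f c T (wprefix i k.+1).
Proof.
move=> A [B [j [l [/andP [H1 H2] ->]]] <-].
case: l H1 H2 => [|l] H1 H2.
  by move: H1 H2; rewrite /= /wprefix /= cost_nil => H1 H2; exfalso; lra.
pose j' := fun t => if t is t'.+1 then j t' else i k.
exists (wcomp f (wprefix j' l.+2) @` T).
  exists j', l.+2; split => //.
  have e1 : (l.+2 - 1 = l.+1)%N by rewrite subn1.
  have e2 : (l.+1 - 1 = l)%N by rewrite subn1.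
  rewrite e1 (wprefixS i k) -cats1 cost_cat /j' !wprefix_cons (cost_cons (i k) (wprefix j l)) (cost_cons (i k) (wprefix j l.+1)).
  have -> : cost c [:: i k] = c (i k) by rewrite /cost big_seq1.
  rewrite e2 in H1.
  apply/andP; split; lra.
apply: img2_eq => x.
by rewrite wprefixS -cats1 wcompinv_cat /j' wprefix_cons /= invf.
Qed.

Lemma PiT_monoD (T : set 'rV[R]_n) (i : nat -> 'I_m) k t :
  PiT f c T (wprefix i k) `<=` PiT f c T (wprefix i (k + t)).
Proof.
elim: t => [|t IH]; first by rewrite addn0.
by apply: subset_trans IH _; rewrite addnS; apply: PiT_mono.
Qed.

Lemma imgc_comp (g h : 'rV[R]_n -> 'rV[R]_n) C :
  imgc g (imgc h C) = imgc (g \o h) C.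
Proof.
rewrite /imgc image_comp; apply: eq_imagel => B _ /=.
by rewrite image_comp.
Qed.

Lemma PiT_shift (i j : nat -> 'I_m) (p q : nat)
  (Hshift : iter p (@sshift m) i = iter q (@sshift m) j)
  (Hcost : cost c (wprefix i p) = cost c (wprefix j q)) T k :
  PiT f c T (wprefix i (p + k)) =
  imgc (wcompinv f (wprefix i p) \o wcomp f (seq.rev (wprefix j q)))
    (PiT f c T (wprefix j (q + k))).
Proof.
rewrite !wprefixD Hshift.
set u := wprefix _ k.
have Hc : cost c (wprefix i p ++ u) = cost c (wprefix j q ++ u) by rewrite !cost_cat Hcost.
rewrite /PiT Hc imgc_comp; congr imgc; apply: funext => x /=.
by rewrite !wcompinv_cat wcomp_rev_inv.
Qed.

End Comb.


Theorem theorem2 (R : realType) (n m : nat)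
  (f : 'I_m -> 'rV[R]_n -> 'rV[R]_n) (lam a c : 'I_m -> R)
  (Hsim : forall l x y, enorm (f l x - f l y) = lam l * enorm (x - y))
  (Hlam : forall l, 0 < lam l < 1)
  (Hdistinct : exists l1 l2, f l1 <> f l2)
  (Hosc : OSC f)
  (Ha : forall l, lam l = (\big[Num.max/0]_(l' < m) lam l') `^ a l)
  (Hc : forall l, c l = a l)
  (i j : nat -> 'I_m) (p q : nat)
  (Hshift : iter p (@sshift m) i = iter q (@sshift m) j)
  (Hcost : cost c (wprefix i p) = cost c (wprefix j q))
  (T : set 'rV[R]_n) (HT : closed T) :
  PiTinf f c T i =
  imgc (wcompinv f (wprefix i p) \o wcomp f (seq.rev (wprefix j q))) (PiTinf f c T j).
Proof.
have lam0 : forall l, 0 < lam l by move=> l; case/andP: (Hlam l).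
have e0 : enorm (0 : 'rV[R]_n) = 0.
  by rewrite /enorm big1 ?sqrtr0 // => k _; rewrite mxE expr0n.
have inj : forall l x y, f l x = f l y -> x = y.
  move=> l x y E; have := Hsim l x y; rewrite E subrr e0 => /esym/eqP.
  rewrite mulf_eq0 gt_eqF //= => /eqP /(congr1 (fun r => r ^+ 2)).
  rewrite enormE expr0n /= => /dot_eq0 /eqP; rewrite subr_eq0 => /eqP //.
have invf : forall l x, inv_map (f l) (f l x) = x.
  move=> l x; rewrite /inv_map; apply: xget_unique => [//|y /= /inj //].
have finv : forall l y, f l (inv_map (f l) y) = y.
  move=> l y; rewrite /inv_map.
  exact: (xgetPex 0 (@sim_surj R n (f l) (lam l) (lam0 l) (Hsim l) y)).
apply/seteqP; split.
  move=> A [k /= k0 HA].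
  have HA' := @PiT_monoD R n m f c invf T i k p A HA.
  rewrite addnC (@PiT_shift R n m f c finv i j p q Hshift Hcost) in HA'.
  case: HA' => B HB <-; exists B => //.
  exists (q + k)%N => //=; by rewrite addn_gt0 k0 orbT.
move=> A [B [k /= k0 HB] <-].
have HB' := @PiT_monoD R n m f c invf T j k q B HB.
rewrite addnC in HB'.
exists (p + k)%N; first by rewrite /= addn_gt0 k0 orbT.
by rewrite (@PiT_shift R n m f c finv i j p q Hshift Hcost); exists B.
Qed.
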